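(* Let $0<\alpha<1$. Let $N\ge1$, $0\le N_1<N$, and let $p=(p_1,\dots,p_N)$ be a probability vector with $p_1=\dots=p_{N_1}=0$ and $p_k>0$ for $N_1<k\le N$. Let $c_1,\dots,c_N$ be fixed reals, not all zero, with $0\le c_k\le1$ for $k\le N_1$, $|c_k|\le1$ for $k>N_1$, and $\sum_{k=1}^Nc_k=0$. For $0<\varepsilon\le\min_{k>N_1}p_k$ define $p(\varepsilon)$ by $p_k(\varepsilon)=c_k\varepsilon$ for $k\le N_1$ and $p_k(\varepsilon)=p_k+c_k\varepsilon$ for $k>N_1$. Write $S=\sum_{k=N_1+1}^Np_k^\alpha$. Then, as $\varepsilon\to0+$: (i) if $N_1\ge1$ and $c_k\ne0$ for some $k\le N_1$, then $\mathcal H_\alpha(p)-\mathcal H_\alpha(p(\varepsilon))\sim\frac{\varepsilon^\alpha}{\alpha-1}\Big(\sum_{k=1}^{N_1}c_k^\alpha\Big)S^{-1}$; (ii) if $c_k=0$ for all $k\le N_1$ and $\sum_{k=N_1+1}^Nc_kp_k^{\alpha-1}\ne0$, then $\mathcal H_\alpha(p)-\mathcal H_\alpha(p(\varepsilon))\sim\frac{\alpha\varepsilon}{\alpha-1}\Big(\sum_{k=N_1+1}^Nc_kp_k^{\alpha-1}\Big)S^{-1}$; (iii) if $c_k=0$ for all $k\le N_1$ and $\sum_{k=N_1+1}^Nc_kp_k^{\alpha-1}=0$, then $\mathcal H_\alpha(p)-\mathcal H_\alpha(p(\varepsilon))\sim\frac{\alpha\varepsilon^2}{2}\Big(\sum_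{k=N_1+1}^Nc_k^2p_k^{\alpha-2}\Big)S^{-1}$.
   Context: $\mathcal H_\alpha(p)=\frac1{1-\alpha}\log\sum_kp_k^\alpha$ (Rényi entropy), with $0^\alpha=0$; logarithms are natural. $a(\varepsilon)\sim b(\varepsilon)$ means $a(\varepsilon)/b(\varepsilon)\to1$. *)

(* Defs.v *)
From HB Require Import structures.
From mathcomp Require Import all_boot all_order all_algebra.
From mathcomp Require Import all_classical all_reals all_analysis.
Set Implicit Arguments. Unset Strict Implicit. Unset Printing Implicit Defensive.
Import Order.TTheory GRing.Theory Num.Theory.
Import numFieldNormedType.Exports.
Local Open Scope ring_scope.

(* Renyi entropy H_alpha(p) = 1/(1-alpha) * ln (sum_k p_k^alpha), with
   powR 0 alpha = 0 for alpha <> 0 (convention 0^alpha = 0). *)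
Definition renyi (R : realType) (N : nat) (alpha : R) (p : 'I_N -> R) : R :=
  (1 - alpha)^-1 * ln (\sum_(k < N) p k `^ alpha).

(* The perturbed vector p(eps); indices are 0-based, so "k <= N1" of the
   paper becomes (k < N1)%N here. *)
Definition perturb (R : realType) (N N1 : nat) (p c : 'I_N -> R) (eps : R)
  : 'I_N -> R :=
  fun k => if (k < N1)%N then c k * eps else p k + c k * eps.

(* Main.v *)
Require Import Defs.
From HB Require Import structures.
From mathcomp Require Import all_boot all_order all_algebra.
From mathcomp Require Import all_classical all_reals all_analysis.
From mathcomp Require Import ring lra.
Import Order.TTheory GRing.Theory Num.Theory.
Import numFieldNormedType.Exports.
Local Open Scope classical_set_scope.
Local Open Scope ring_scope.

Definition rk {R : realType} (al a t : R) :=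
  ((1 + a * t) `^ al - 1 - al * (a * t) - al * (al - 1) / 2 * (a * t) ^+ 2) / t ^+ 2.

Section S.
Context {R : realType}.
Lemma dq (f : R -> R) (x df : R) : is_derive x 1 f df ->
  (fun h => h^-1 * (f (h + x) - f x)) @ 0^' --> df.
Proof.
move=> [d dv]; rewrite -dv.
have -> : (fun h => h^-1 * (f (h + x) - f x)) = 
   (fun h => h^-1 *: ((f \o shift x) (h *: 1) - f x)).
  by apply/funext => h /=; rewrite [h *: 1]mulr1.
exact: d.
Qed.

Lemma dq1 (b e : R) : 0 < e -> exists2 d, 0 < d & forall h, `|h| < d ->
  `|(1 + h) `^ b - 1 - b * h| <= e * `|h|.
Proof.
move=> e0.
have := @dq _ _ _ (is_derive1_powR b (ltr01 : (0:R) < 1)).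
rewrite powR1 mulr1 => /cvgrPdist_le /(_ e e0).
rewrite near_withinE => /nbhs_norm0P [d d0 hd].
exists d => // h hd'.
have [->|h0] := eqVneq h 0; first by rewrite addr0 powR1 mulr0 !subrr normr0 mulr0.
have := hd h; rewrite /= hd' => /(_ isT h0).
rewrite (addrC h 1) => H.
have -> : (1 + h) `^ b - 1 - b * h = - h * (- (h^-1 * ((1 + h) `^ b - 1)) + b).
  by field.
rewrite normrM normrN mulrC ler_pM2r ?normr_gt0 //.
by rewrite addrC.
Qed.
Lemma kder (a K x : R) : 0 < x ->
  is_derive x 1 (fun t : R => t `^ a - 1 - a * (t - 1) - K * (t - 1) ^+ 2)
   (a * x `^ (a - 1) - a - 2 * K * (x - 1)).
Proof.
move=> x0.
have h1 := is_derive1_powR a x0.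
have hl : is_derive x 1 ((@id R) - cst 1) (1 - 0).
  by apply: is_deriveB.
have h3 := is_deriveZ a hl.
have h4 := is_deriveZ K (is_deriveX 2 hl).
have h5 := is_deriveB (is_deriveB (is_deriveB h1 (is_derive_cst (1:R) x 1)) h3) h4.
have -> : (fun t : R => t `^ a - 1 - a * (t - 1) - K * (t - 1) ^+ 2) =
  ((@powR R)^~ a - cst 1 - a \*: (@id R - cst 1) - K \*: (@id R - cst 1) ^+ 2).
  by apply/funext => t /=.
apply: is_derive_eq; rewrite /= !subr0 expr1 !scaler1 /GRing.scale /=.
rewrite (_ : (id - cst 1) x = x - 1) //; ring.
Qed.
Lemma mvt_k (a K lo hi : R) : 0 < lo -> lo <= hi ->
  exists2 c, lo <= c <= hi &
  (hi `^ a - 1 - a * (hi - 1) - K * (hi - 1) ^+ 2) -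
  (lo `^ a - 1 - a * (lo - 1) - K * (lo - 1) ^+ 2) =
   (a * c `^ (a - 1) - a - 2 * K * (c - 1)) * (hi - lo).
Proof.
move=> lo0 lohi.
have hd : forall x, x \in `]lo, hi[ -> is_derive x 1
   (fun t : R => t `^ a - 1 - a * (t - 1) - K * (t - 1) ^+ 2)
  (a * x `^ (a - 1) - a - 2 * K * (x - 1)).
  move=> x; rewrite in_itv /= => /andP[lox _]; apply: kder; exact: lt_trans lo0 lox.
have hc : {within `[lo, hi], continuous (fun t : R => t `^ a - 1 - a * (t - 1) - K * (t - 1) ^+ 2)}.
  apply: derivable_within_continuous => x; rewrite in_itv /= => /andP[lox _].
  by have [] := kder a K x (lt_le_trans lo0 lox).
have [c cin ->] := MVT_segment lohi hd hc.
by exists c => //; move: cin; rewrite in_itv.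
Qed.

Lemma core (a e : R) : 0 < e -> exists2 d, 0 < d & forall u, `|u| < d ->
  `|(1 + u) `^ a - 1 - a * u - a * (a - 1) / 2 * u ^+ 2| <= e * u ^+ 2.
Proof.
move=> e0.
set K := a * (a - 1) / 2.
have e'0 : 0 < e / (`|a| + 1) by rewrite divr_gt0 // ltr_wpDl.
have [d1 d10 hd1] := @dq1 (a - 1) _ e'0.
exists (Num.min d1 1); first by rewrite lt_min d10 ltr01.
move=> u; rewrite lt_min => /andP[ud1 u1].
have hdk : forall c, `|c - 1| <= `|u| ->
    `|a * c `^ (a - 1) - a - 2 * K * (c - 1)| <= e * `|u|.
  move=> c cu.
  have := hd1 (c - 1) (le_lt_trans cu ud1).
  rewrite (addrC 1 (c - 1)) subrK => H.
  have -> : a * c `^ (a - 1) - a - 2 * K * (c - 1) =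
     a * (c `^ (a - 1) - 1 - (a - 1) * (c - 1)) by rewrite /K; field.
  rewrite normrM.
  apply: (le_trans (ler_wpM2l (normr_ge0 a) H)).
  rewrite mulrA; apply: ler_pM; [by rewrite mulr_ge0 // divr_ge0 // ltW // ltr_wpDl
     | exact: normr_ge0 | | exact: cu].
  rewrite mulrCA ger_pMr // ler_pdivrMr ?mul1r ?ltr_wpDl //.
  by rewrite lerDl.
have -> : (1 + u) `^ a - 1 - a * u - K * u ^+ 2 =
  ((1 + u) `^ a - 1 - a * ((1 + u) - 1) - K * ((1 + u) - 1) ^+ 2) -
  (1 `^ a - 1 - a * (1 - 1) - K * (1 - 1) ^+ 2).
  by rewrite powR1; ring.
have u1' : 0 < 1 + u.
  by move: u1; rewrite ltr_norml => /andP[]; lra.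
have [u0|u0] := leP 0 u.
- have [c /andP[c1 c2] ->] := @mvt_k a K 1 (1 + u) ltr01 (ler_wpDr u0 (lexx 1)).
  rewrite (_ : 1 + u - 1 = u); last ring.
  rewrite normrM (ger0_norm u0) expr2 (mulrA e u u); apply: ler_wpM2r => //.
  have := hdk c; rewrite (ger0_norm u0); apply.
  by rewrite ger0_norm; lra.
- have u2 : 1 + u <= 1 by lra.
  have [c /andP[c1 c2] E] := @mvt_k a K (1 + u) 1 u1' u2.
  rewrite -opprB normrN E (_ : 1 - (1 + u) = - u); last ring.
  rewrite normrM normrN (ltr0_norm u0) -(sqrrN u) expr2 (mulrA e (-u) (-u)); apply: ler_wpM2r; first lra.
  have := hdk c; rewrite (ltr0_norm u0); apply.
  by rewrite ler0_norm; lra.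
Qed.


Lemma exp2lim (al a : R) :
  (fun t => ((1 + a * t) `^ al - 1 - al * (a * t) - al * (al - 1) / 2 * (a * t) ^+ 2) / t ^+ 2)
  @ 0^'+ --> 0.
Proof.
apply/cvgrPdist_le => e e0.
have e'0 : 0 < e / (a ^+ 2 + 1) by rewrite divr_gt0 // ltr_wpDl // sqr_ge0.
have [d d0 hd] := @core al _ e'0.
have d'0 : 0 < d / (`|a| + 1) by rewrite divr_gt0 // ltr_wpDl.
near=> t.
have t0 : 0 < t by near: t; exact: nbhs_right_gt.
have td : t < d / (`|a| + 1) by near: t; exact: nbhs_right_lt.
have hu : `|a * t| < d.
  rewrite normrM (gtr0_norm t0).
  rewrite ltr_pdivlMr ?ltr_wpDl // in td.
  apply: le_lt_trans td; rewrite mulrC ler_wpM2l ?ltW // ?ltrDl ?lerDl //.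
have := hd _ hu.
rewrite sub0r normrN normrM normfV normrX (gtr0_norm t0) => H.
rewrite ler_pdivrMr ?exprn_gt0 //.
apply: (le_trans H).
rewrite exprMn mulrA ler_wpM2r ?sqr_ge0 //.
rewrite mulrAC ler_pdivrMr ?ltr_wpDl ?sqr_ge0 // ler_wpM2l ?ltW //.
by rewrite ltrDl.
Unshelve. all: by end_near. Qed.
Lemma lnb (y : R) : `|y| <= 1/2 -> `|ln (1 + y) - y| <= 2 * y ^+ 2.
Proof.
rewrite ler_norml => /andP[y1 y2].
have y0 : 0 < 1 + y by lra.
have h1 : ln (1 + y) <= y by apply: le_ln1Dx; lra.
have h2 : y / (1 + y) <= ln (1 + y).
  have hx : -1 < - (y / (1 + y)).
    rewrite ltrNl opprK ltr_pdivrMr //; lra.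
  have := le_ln1Dx hx.
  have -> : 1 + - (y / (1 + y)) = (1 + y)^-1 by field; lra.
  rewrite lnV ?posrE // lerN2 //.
rewrite ler0_norm ?subr_le0 //.
rewrite opprB.
apply: (le_trans (lerB (lexx y) h2)).
have -> : y - y / (1 + y) = y ^+ 2 / (1 + y) by field; lra.
rewrite ler_pdivrMr //.
have := sqr_ge0 y; rewrite expr2; nra.
Qed.

Lemma alg (S G u L e : R) : 0 < S -> G != 0 -> `|1 - u| <= 1/2 -> `|1 - u| <= e/2 ->
  `|G| <= e * S / 10 -> `|L - u * G / S| <= 2 * (u * G / S) ^+ 2 ->
  `|1 - L * S / G| <= e.
Proof.
move=> S0 G0 u1 u2 g2 hL.
have key : 1 - L * S / G = (1 - u) - (L - u * G / S) * S / G.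
  by field; apply/andP; split => //; rewrite gt_eqF.
rewrite key; apply: (le_trans (ler_normB _ _)).
rewrite [X in _ <= X](splitr e); apply: lerD => //.
rewrite !normrM normfV (gtr0_norm S0).
have Ga : 0 < `|G| by rewrite normr_gt0.
rewrite ler_pdivrMr //.
apply: (le_trans (ler_wpM2r (ltW S0) hL)).
have -> : 2 * (u * G / S) ^+ 2 * S = 2 * u ^+ 2 * G ^+ 2 / S.
  by field; rewrite gt_eqF.
rewrite -(real_normK (num_real G)) ler_pdivrMr //.
have hu : u ^+ 2 <= 9/4.
  move: u1; rewrite ler_norml => /andP[h1 h2]; rewrite expr2; nra.
have hu0 : 0 <= u ^+ 2 by exact: sqr_ge0.
move: Ga g2 hu hu0; set g := `|G|; set v := u ^+ 2 => Ga g2 hu hu0.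
have e0 : 0 <= e by have := le_trans (normr_ge0 _) u2; lra.
have h3 : g * g <= g * (e * S / 10) by rewrite ler_wpM2l ?(ltW Ga).
have h4 : v * (g * g) <= 9/4 * (g * g) by rewrite ler_wpM2r // mulr_ge0 // ltW.
have h5 : 0 <= g * (e * S) by rewrite mulr_ge0 ?mulr_ge0 // ltW.
rewrite expr2. nra.
Qed.


Lemma final (S : R) (f G : R -> R) : 0 < S -> G @ 0^'+ --> (0:R) ->
  (fun t => (f t - S) / G t) @ 0^'+ --> (1:R) ->
  (fun t => (ln (f t) - ln S) * S / G t) @ 0^'+ --> (1:R).
Proof.
move=> S0 hG hu.
apply/cvgrPdist_le => e e0.
have h12 : (0:R) < 1/2 by lra.
have e20 : 0 < e / 2 by lra.
have S60 : 0 < S / 6 by lra.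
have eS0 : 0 < e * S / 10 by rewrite divr_gt0 // mulr_gt0.
near=> t.
have u1 : `|1 - (f t - S) / G t| <= 1/2 by near: t; exact: (cvgr_dist_le _ _ hu _ h12).
have u2 : `|1 - (f t - S) / G t| <= e/2 by near: t; exact: (cvgr_dist_le _ _ hu _ e20).
have g1 : `|G t| <= S / 6 by near: t; exact: (cvgr0_norm_le _ hG _ S60).
have g2 : `|G t| <= e * S / 10 by near: t; exact: (cvgr0_norm_le _ hG _ eS0).
have G0 : G t != 0.
  by apply/eqP => G0; move: u1; rewrite G0 invr0 mulr0 subr0 normr1; lra.
move: u1 u2; move uE : ((f t - S) / G t) => u u1 u2.
have fy : f t = S * (1 + u * G t / S).
  by rewrite -uE; field; rewrite G0 gt_eqF.
have y2 : `|u * G t / S| <= 1/2.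
  rewrite !normrM normfV (gtr0_norm S0) ler_pdivrMr //.
  have : `|u| <= 3/2 by move: u1; rewrite !ler_norml => /andP[]; lra.
  move=> hu3.
  have := ler_pM (normr_ge0 u) (normr_ge0 (G t)) hu3 g1. lra.
have y0 : 0 < 1 + u * G t / S by move: y2; rewrite ler_norml => /andP[]; lra.
rewrite fy lnM ?posrE // (addrC (ln S)) addrK.
apply: (@alg S (G t) u _ e S0 G0 u1 u2 g2).
exact: lnb.
Unshelve. all: by end_near. Qed.
Lemma near_eq_lim (g h : R -> R) (l : R) : (\forall t \near 0^'+, g t = h t) ->
  g @ 0^'+ --> l -> h @ 0^'+ --> l.
Proof. by move=> E hg; apply: cvg_trans hg; apply: near_eq_cvg. Qed.

Lemma cvg_sumr (I : eqType) (r : seq I) (P : pred I) (g : I -> R -> R) (l : I -> R) :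
  (forall i, P i -> g i @ 0^'+ --> l i) ->
  (fun t => \sum_(i <- r | P i) g i t) @ 0^'+ --> \sum_(i <- r | P i) l i.
Proof.
move=> hg; elim: r => [|i r IH].
  rewrite big_nil; under eq_fun do rewrite big_nil; exact: cvg_cst.
case Pi: (P i).
- have -> : (fun t => \sum_(j <- i :: r | P j) g j t) =
     (fun t => g i t + \sum_(j <- r | P j) g j t).
    by apply/funext => t; rewrite big_cons Pi.
  by rewrite big_cons Pi; apply: cvgD => //; apply: hg.
- have -> : (fun t => \sum_(j <- i :: r | P j) g j t) =
     (fun t => \sum_(j <- r | P j) g j t).
    by apply/funext => t; rewrite big_cons Pi.
  by rewrite big_cons Pi.
Qed.

Lemma cvg_t : (fun t : R => t) @ 0^'+ --> (0:R).
Proof. exact: cvg_at_right_filter (cvg_id). Qed.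

Lemma expansion (al : R) N N1 (p c : 'I_N -> R) :
 (forall k : 'I_N, (N1 <= k)%N -> 0 < p k) -> (forall k : 'I_N, (k < N1)%N -> 0 <= c k) ->
 \forall t \near 0^'+, \sum_(k < N) (perturb N1 p c t k) `^ al - \sum_(k < N | (N1 <= k)%N) p k `^ al =
   t `^ al * (\sum_(k < N | (k < N1)%N) c k `^ al)
   + al * t * (\sum_(k < N | (N1 <= k)%N) p k `^ al * (c k / p k))
   + t ^+ 2 * (al * (al - 1) / 2 * (\sum_(k < N | (N1 <= k)%N) p k `^ al * (c k / p k) ^+ 2)
       + \sum_(k < N | (N1 <= k)%N) p k `^ al * rk al (c k / p k) t).
Proof.
move=> hp hc.
set A := \sum_(k < N) `|c k / p k|.
have A0 : 0 <= A by apply: sumr_ge0.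
have A10 : 0 < (A + 1)^-1 by rewrite invr_gt0; lra.
near=> t.
have t0 : 0 < t by near: t; exact: nbhs_right_gt.
have tA : t < (A + 1)^-1 by near: t; exact: nbhs_right_lt.
have hA : forall k, `|c k / p k| <= A.
  by move=> k; rewrite /A (bigD1 k) //= lerDl sumr_ge0.
have At : A * t < 1.
  move: tA; rewrite -[(A + 1)^-1]div1r ltr_pdivlMr; last lra.
  move=> h; have : 0 <= t by lra. nra.
have pos : forall k : 'I_N, 0 < 1 + c k / p k * t.
  move=> k.
  have h1 : `|c k / p k * t| < 1.
    rewrite normrM (gtr0_norm t0); apply: le_lt_trans At.
    by apply: ler_wpM2r; [exact: ltW | exact: hA].
  by move: h1; rewrite ltr_norml => /andP[]; lra.
rewrite (bigID (fun k : 'I_N => (k < N1)%N)) /=.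
under [X in X + _ - _]eq_bigr => k hk.
  rewrite /perturb hk powRM ?hc ?ltW //.
  over.
under [X in _ + X - _]eq_bigr => k hk.
  rewrite /perturb (negbTE hk).
  have pk0 : 0 < p k by apply: hp; rewrite leqNgt.
  have -> : p k + c k * t = p k * (1 + c k / p k * t) by field; rewrite gt_eqF.
  rewrite powRM ?(ltW pk0) ?(ltW (pos k)) //.
  have -> : p k `^ al * (1 + c k / p k * t) `^ al = p k `^ al + al * t * (p k `^ al * (c k / p k))
    + t ^+ 2 * (al * (al - 1) / 2 * (p k `^ al * (c k / p k) ^+ 2) + p k `^ al * rk al (c k / p k) t).
    by rewrite /rk; field; rewrite (gt_eqF t0) (gt_eqF pk0).
  over.
rewrite [X in _ + X - _](eq_bigl (fun k : 'I_N => (N1 <= k)%N)); last by move=> k /=; rewrite -leqNgt.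
rewrite -big_distrl /= !big_split /= -?big_distrr /= big_split /= -big_distrr /=.
ring.
Unshelve. all: by end_near. Qed.


Lemma rho_cvg (al : R) N N1 (p c : 'I_N -> R) :
  (fun t => \sum_(k < N | (N1 <= k)%N) p k `^ al * rk al (c k / p k) t) @ 0^'+ --> (0:R).
Proof.
have := @cvg_sumr _ (index_enum 'I_N) (fun k : 'I_N => (N1 <= k)%N)
  (fun k t => p k `^ al * rk al (c k / p k) t) (fun _ => 0).
rewrite big1 //; apply => k _.
rewrite -[X in _ --> X](mulr0 (p k `^ al)); apply: cvgM; first exact: cvg_cst.
exact: (exp2lim al (c k / p k)).
Qed.

Lemma sum_gt0_one N (P : pred 'I_N) (F : 'I_N -> R) k : P k -> 0 < F k ->
  (forall i, P i -> 0 <= F i) -> 0 < \sum_(i < N | P i) F i.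
Proof.
move=> Pk Fk H; rewrite (bigD1 k) //=.
apply: (lt_le_trans Fk); rewrite lerDl; apply: sumr_ge0 => i /andP[Pi _]; exact: H.
Qed.

Lemma T_eq (al : R) N N1 (p c : 'I_N -> R) : (forall k : 'I_N, (N1 <= k)%N -> 0 < p k) ->
  \sum_(k < N | (N1 <= k)%N) p k `^ al * (c k / p k) =
  \sum_(k < N | (N1 <= k)%N) c k * p k `^ (al - 1).
Proof.
move=> hp; apply: eq_bigr => k hk; have pk := hp k hk.
rewrite powRB ?powRr1 ?ltW //; last by rewrite (gt_eqF pk) implybT.
by field; rewrite gt_eqF.
Qed.

Lemma U_eq (al : R) N N1 (p c : 'I_N -> R) : (forall k : 'I_N, (N1 <= k)%N -> 0 < p k) ->
  \sum_(k < N | (N1 <= k)%N) p k `^ al * (c k / p k) ^+ 2 =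
  \sum_(k < N | (N1 <= k)%N) c k ^+ 2 * p k `^ (al - 2).
Proof.
move=> hp; apply: eq_bigr => k hk; have pk := hp k hk.
rewrite powRB; last by rewrite (gt_eqF pk) implybT.
rewrite powR_mulrn ?ltW //.
by field; rewrite gt_eqF.
Qed.

Lemma S_eq (al : R) N N1 (p : 'I_N -> R) : al != 0 -> (forall k : 'I_N, (k < N1)%N -> p k = 0) ->
  \sum_(k < N) p k `^ al = \sum_(k < N | (N1 <= k)%N) p k `^ al.
Proof.
move=> al0 hp; rewrite (bigID (fun k : 'I_N => (k < N1)%N)) /= big1 ?add0r.
  by apply: eq_bigl => k; rewrite -leqNgt.
by move=> k hk; rewrite hp // powR0.
Qed.
End S.

Theorem mainTheorem8 (R : realType) (alpha : R) (N N1 : nat) (p c : 'I_N -> R) :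
  0 < alpha < 1 ->
  (1 <= N)%N -> (N1 < N)%N ->
  (forall k, 0 <= p k) -> \sum_(k < N) p k = 1 ->
  (forall k : 'I_N, (k < N1)%N -> p k = 0) ->
  (forall k : 'I_N, (N1 <= k)%N -> 0 < p k) ->
  (exists k, c k != 0) ->
  (forall k : 'I_N, (k < N1)%N -> 0 <= c k <= 1) ->
  (forall k : 'I_N, (N1 <= k)%N -> `|c k| <= 1) ->
  \sum_(k < N) c k = 0 ->
  let S := \sum_(k < N | (N1 <= k)%N) p k `^ alpha in
  let D := fun eps => renyi alpha p - renyi alpha (perturb N1 p c eps) in
  (* (i) *)
  ((exists k : 'I_N, (k < N1)%N /\ c k != 0) ->
     (fun eps => D eps /
        (eps `^ alpha / (alpha - 1) * (\sum_(k < N | (k < N1)%N) c k `^ alpha)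
           * S^-1))
     @ 0^'+ --> (1 : R)) /\
  (* (ii) *)
  ((forall k : 'I_N, (k < N1)%N -> c k = 0) ->
   \sum_(k < N | (N1 <= k)%N) c k * p k `^ (alpha - 1) != 0 ->
     (fun eps => D eps /
        (alpha * eps / (alpha - 1)
           * (\sum_(k < N | (N1 <= k)%N) c k * p k `^ (alpha - 1)) * S^-1))
     @ 0^'+ --> (1 : R)) /\
  (* (iii) *)
  ((forall k : 'I_N, (k < N1)%N -> c k = 0) ->
   \sum_(k < N | (N1 <= k)%N) c k * p k `^ (alpha - 1) = 0 ->
     (fun eps => D eps /
        (alpha * eps ^+ 2 / 2
           * (\sum_(k < N | (N1 <= k)%N) c k ^+ 2 * p k `^ (alpha - 2)) * S^-1))
     @ 0^'+ --> (1 : R)).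
Proof.
move=> /andP[al0 al1] N1' N1N p0 p1 pQ pP [k0 ck0] cQ cP csum S D.
have al0' : alpha != 0 by rewrite gt_eqF.
have al1' : alpha - 1 != 0 by rewrite subr_eq0 lt_eqF.
have al1'' : 1 - alpha != 0 by rewrite subr_eq0 gt_eqF.
have S0 : 0 < S.
  apply: (@sum_gt0_one _ _ _ _ (Ordinal N1N)) => //=.
    by apply: powR_gt0; apply: pP => /=.
  by move=> i _; apply: powR_ge0.
have hD : forall t, D t = (1 - alpha)^-1 * (ln S - ln (\sum_(k < N) (perturb N1 p c t k) `^ alpha)).
  by move=> t; rewrite /D /renyi (@S_eq R alpha N N1 p al0' pQ) mulrBr.
have hc : forall k : 'I_N, (k < N1)%N -> 0 <= c k by move=> k /cQ /andP[].
have hexp := @expansion R alpha N N1 p c pP hc.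
have hrho := @rho_cvg R alpha N N1 p c.
move: hexp hrho hD.
set f := fun t => \sum_(k < N) (perturb N1 p c t k) `^ alpha.
set C1 := \sum_(k < N | (k < N1)%N) c k `^ alpha.
set T := \sum_(k < N | (N1 <= k)%N) p k `^ alpha * (c k / p k).
set U := \sum_(k < N | (N1 <= k)%N) p k `^ alpha * (c k / p k) ^+ 2.
set rho := fun t => \sum_(k < N | (N1 <= k)%N) p k `^ alpha * rk alpha (c k / p k) t.
move=> hexp hrho hD.
rewrite -(@T_eq R alpha N N1 p c pP) -(@U_eq R alpha N N1 p c pP) -/T -/U.
have ha : 0 < 1 - alpha by rewrite subr_gt0.
split; [|split].
- move=> [k1 [k1Q ck1]].
  have C10 : 0 < C1.
    apply: (@sum_gt0_one _ _ _ _ k1) => //.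
      by apply: powR_gt0; rewrite lt_def ck1; have /andP[] := cQ k1 k1Q.
    by move=> i _; apply: powR_ge0.
  apply: (@near_eq_lim R (fun t => (ln (f t) - ln S) * S / (t `^ alpha * C1))).
    near=> t.
    have t0 : 0 < t by near: t; exact: nbhs_right_gt.
    have tp : t `^ alpha != 0 by rewrite gt_eqF // powR_gt0.
    by rewrite hD; field; rewrite (gt_eqF S0) (gt_eqF C10) al1' tp al1''.
  apply: final S0 _ _.
    rewrite -[X in _ --> X](mul0r C1); apply: cvgM; [exact: (powR_cvg0 al0) | exact: cvg_cst].
  apply: (@near_eq_lim R (fun t => 1 + t `^ (1 - alpha) *
     ((alpha * T + t * (alpha * (alpha - 1) / 2 * U + rho t)) / C1))).
    near=> t.
    have t0 : 0 < t by near: t; exact: nbhs_right_gt.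
    have tp : t `^ alpha != 0 by rewrite gt_eqF // powR_gt0.
    have E : f t - S = t `^ alpha * C1 + alpha * t * T +
       t ^+ 2 * (alpha * (alpha - 1) / 2 * U + rho t) by near: t; exact: hexp.
    rewrite E powRB ?powRr1 ?ltW //; last by rewrite (gt_eqF t0) implybT.
    by field; rewrite (gt_eqF C10) tp.
  rewrite -[X in _ --> X](addr0 1); apply: cvgD; first exact: cvg_cst.
  rewrite -[X in _ --> X](mul0r ((alpha * T + 0 * (alpha * (alpha - 1) / 2 * U + 0)) / C1)).
  apply: cvgM; first exact: (powR_cvg0 ha).
  apply: cvgM; last exact: cvg_cst.
  apply: cvgD; first exact: cvg_cst.
  apply: cvgM; first exact: cvg_t.
  apply: cvgD; [exact: cvg_cst | exact: hrho].
- move=> cQ0 T0.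
  have C10 : C1 = 0 by rewrite /C1 big1 // => k hk; rewrite cQ0 // powR0.
  apply: (@near_eq_lim R (fun t => (ln (f t) - ln S) * S / (alpha * t * T))).
    near=> t.
    have t0 : 0 < t by near: t; exact: nbhs_right_gt.
    by rewrite hD; field; rewrite (gt_eqF S0) T0 al1' al0' (gt_eqF t0) al1''.
  apply: final S0 _ _.
    rewrite -[X in _ --> X](_ : alpha * 0 * T = 0); last by rewrite mulr0 mul0r.
    apply: cvgM; last exact: cvg_cst.
    apply: cvgM; [exact: cvg_cst | exact: cvg_t].
  apply: (@near_eq_lim R (fun t => 1 + t *
     ((alpha * (alpha - 1) / 2 * U + rho t) / (alpha * T)))).
    near=> t.
    have t0 : 0 < t by near: t; exact: nbhs_right_gt.
    have E : f t - S = t `^ alpha * C1 + alpha * t * T +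
       t ^+ 2 * (alpha * (alpha - 1) / 2 * U + rho t) by near: t; exact: hexp.
    rewrite E C10.
    by field; rewrite T0 al0' (gt_eqF t0).
  rewrite -[X in _ --> X](addr0 1); apply: cvgD; first exact: cvg_cst.
  rewrite -[X in _ --> X](mul0r ((alpha * (alpha - 1) / 2 * U + 0) / (alpha * T))).
  apply: cvgM; first exact: cvg_t.
  apply: cvgM; last exact: cvg_cst.
  apply: cvgD; [exact: cvg_cst | exact: hrho].
- move=> cQ0 T0.
  have C10 : C1 = 0 by rewrite /C1 big1 // => k hk; rewrite cQ0 // powR0.
  have k0P : (N1 <= k0)%N.
    by rewrite leqNgt; apply/negP => /cQ0 /eqP; apply/negP.
  have U0 : 0 < U.
    apply: (@sum_gt0_one _ _ _ _ k0) => //.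
      have pk0 := pP k0 k0P.
      rewrite mulr_gt0 ?powR_gt0 //.
      rewrite lt_def sqr_ge0 andbT sqrf_eq0 mulf_neq0 //.
      by rewrite invr_eq0 gt_eqF.
    by move=> i _; rewrite mulr_ge0 ?powR_ge0 ?sqr_ge0.
  have K0 : alpha * (alpha - 1) / 2 != 0.
    by rewrite mulf_neq0 // ?mulf_neq0 // invr_eq0.
  apply: (@near_eq_lim R (fun t => (ln (f t) - ln S) * S / (alpha * (alpha - 1) / 2 * t ^+ 2 * U))).
    near=> t.
    have t0 : 0 < t by near: t; exact: nbhs_right_gt.
    by rewrite hD; field; rewrite (gt_eqF S0) (gt_eqF U0) al1' al0' (gt_eqF t0) al1''.
  apply: final S0 _ _.
    have -> : (fun t => alpha * (alpha - 1) / 2 * t ^+ 2 * U) =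
        (fun t => alpha * (alpha - 1) / 2 * (t * t) * U) by apply/funext => t; rewrite expr2.
    rewrite -[X in _ --> X](_ : alpha * (alpha - 1) / 2 * (0 * 0) * U = 0); last by rewrite mulr0 mulr0 mul0r.
    apply: cvgM; last exact: cvg_cst.
    apply: cvgM; first exact: cvg_cst.
    apply: cvgM; exact: cvg_t.
  apply: (@near_eq_lim R (fun t => 1 + rho t / (alpha * (alpha - 1) / 2 * U))).
    near=> t.
    have t0 : 0 < t by near: t; exact: nbhs_right_gt.
    have E : f t - S = t `^ alpha * C1 + alpha * t * T +
       t ^+ 2 * (alpha * (alpha - 1) / 2 * U + rho t) by near: t; exact: hexp.
    rewrite E C10 T0.
    by field; rewrite (gt_eqF U0) al0' al1' (gt_eqF t0).
  rewrite -[X in _ --> X](addr0 1); apply: cvgD; first exact: cvg_cst.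
  rewrite -[X in _ --> X](mul0r ((alpha * (alpha - 1) / 2 * U)^-1)).
  apply: cvgM; [exact: hrho | exact: cvg_cst].
Unshelve. all: by end_near. Qed.
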